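(* Let $G$ be a simple complex Lie group with Lie algebra $\mathfrak g$, $\rho\colon G\to\mathrm{GL}(V)$ a faithful irreducible finite-dimensional complex representation with differential $\rho_*$, $T$ a maximal torus of $G$ with Lie algebra $\mathfrak t$. Suppose $g\in T$ and $x\in\mathfrak t$ satisfy $\rho(g)=\rho_*(x)$ in $\mathrm{End}(V)$. Let $e_1,\dots,e_n$ be a basis of $V$ of $T$-weight vectors with characters $\chi_1,\dots,\chi_n\in X^*(T)$. If $\chi_i,\chi_j,\chi_k$ are among these characters and $\chi_i\chi_k=\chi_j^2$, then $\chi_i(g)=\chi_j(g)=\chi_k(g)$.
   Context: Each character $\chi\in X^*(T)$ is identified with the linear form $t^*\in\mathfrak t^*$ satisfying $\chi(\exp(y))=\exp(t^*(y))$ for all $y\in\mathfrak t$; $t^*_l$ denotes the form corresponding to $\chi_l$, so that $\rho_*(x)e_l=t^*_l(x)e_l$. *)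

(* Defs.v *)
From HB Require Import structures.
From mathcomp Require Import all_boot all_order all_algebra.
From mathcomp Require Import complex.
Set Implicit Arguments. Unset Strict Implicit. Unset Printing Implicit Defensive.
Import Order.TTheory GRing.Theory Num.Theory.
Local Open Scope ring_scope.

(* The maximal torus T of rank r is modelled as (C^* )^r: a point is a row
   vector of complex numbers with all entries nonzero.  Its Lie algebra t is
   C^r, and exp is coordinatewise.  Every (algebraic) character of T is a
   monomial  t |-> prod_m t_m^(a_m)  with a : Z^r; the corresponding linear
   form on t (chi(exp y) = exp(t^*(y))) is  y |-> sum_m a_m y_m. *)

Definition in_torus (R : rcfType) (r : nat) (t : 'rV[R[i]]_r) : Prop :=
  forall m : 'I_r, t 0 m != 0.

Definition character (R : rcfType) (r : nat) (a : 'rV[int]_r)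
  (t : 'rV[R[i]]_r) : R[i] := \prod_(m < r) (t 0 m) ^ (a 0 m).

Definition linform (R : rcfType) (r : nat) (a : 'rV[int]_r)
  (y : 'rV[R[i]]_r) : R[i] := \sum_(m < r) (a 0 m)%:~R * y 0 m.

(* rho restricted to T, in the weight basis e_1..e_n with weights w l:
   rho(t) e_l = chi_l(t) e_l *)
Definition rhoT (R : rcfType) (r n : nat) (w : 'I_n -> 'rV[int]_r)
  (t : 'rV[R[i]]_r) : 'M[R[i]]_n :=
  diag_mx (\row_(l < n) character (w l) t).

(* the differential rho_* restricted to t: rho_*(y) e_l = t^*_l(y) e_l *)
Definition rhoD (R : rcfType) (r n : nat) (w : 'I_n -> 'rV[int]_r)
  (y : 'rV[R[i]]_r) : 'M[R[i]]_n :=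
  diag_mx (\row_(l < n) linform (w l) y).

(* Main.v *)
Require Import Defs.
From HB Require Import structures.
From mathcomp Require Import all_boot all_order all_algebra.
From mathcomp Require Import complex.
From mathcomp Require Import ring.
Import Order.TTheory GRing.Theory Num.Theory.
Local Open Scope ring_scope.

Lemma char_pt (R : rcfType) (r : nat) (a : 'rV[int]_r) (m0 : 'I_r) :
  character a (\row_(m < r) ((if m == m0 then 2 else 1) : R[i])) = 2 ^ (a 0 m0).
Proof.
rewrite /character (bigD1 m0) //= mxE eqxx big1 ?mulr1 // => m /negbTE hm.
by rewrite mxE hm exp1rz.
Qed.

Lemma pt_torus (R : rcfType) (r : nat) (m0 : 'I_r) :
  in_torus (\row_(m < r) ((if m == m0 then 2 else 1) : R[i])).
Proof. by move=> m; rewrite mxE; case: ifP => _; rewrite ?oner_eq0 ?pnatr_eq0. Qed.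

Theorem lemma2 (R : rcfType) (r n : nat) (w : 'I_n -> 'rV[int]_r)
  (g : 'rV[R[i]]_r) (x : 'rV[R[i]]_r) (i j k : 'I_n) :
  in_torus g ->
  rhoT w g = rhoD w x ->
  (forall t : 'rV[R[i]]_r, in_torus t ->
     character (w i) t * character (w k) t = character (w j) t ^+ 2) ->
  character (w i) g = character (w j) g /\ character (w j) g = character (w k) g.
Proof.
move=> Hg H Hc.
have E l : character (w l) g = linform (w l) x.
  by have := congr1 (fun M : 'M[R[i]]_n => M l l) H; rewrite /rhoT /rhoD !mxE eqxx /= !mulr1n.
have W m : w i 0 m + w k 0 m = 2 * w j 0 m.
  have := Hc _ ((@pt_torus R r m)); rewrite !char_pt.
  have u2 : (2 : R[i]) \is a GRing.unit by rewrite unitfE pnatr_eq0.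
  rewrite -exprzDr // => h.
  have h2 : (2 : R[i]) ^ (w i 0 m + w k 0 m) = 2 ^ (w j 0 m * 2).
    by rewrite h -exprz_exp.
  have : (2 : R[i]) ^ (w i 0 m + w k 0 m - w j 0 m * 2) == 1.
    by rewrite exprzDr // h2 -invr_expz mulrV // unitrXz.
  rewrite pexprz_eq1 ?ler0n // pnatr_eq1 orbF subr_eq0 => /eqP ->.
  by rewrite mulrC.
have L : linform (w i) x + linform (w k) x = 2 * linform (w j) x.
  rewrite /linform -big_split mulr_sumr; apply: eq_bigr => m _ /=.
  by rewrite -mulrDl -intrD W intrM mulrA.
have P := Hc g Hg; rewrite !E in P *.
set a := linform (w i) x in L P *; set b := linform (w j) x in L P *;
set c := linform (w k) x in L P *.
clearbody a b c.
have ac : a = c.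
  have : (a - c) ^+ 2 == 0.
    rewrite (_ : (a - c) ^+ 2 = (a + c) ^+ 2 - 4 * (a * c)); last by ring.
    rewrite L P subr_eq0; apply/eqP. by rewrite exprMn -natrX.
  by rewrite expf_eq0 /= subr_eq0 => /eqP.
subst c; have : 2 * (a - b) = 0 by rewrite mulrBr -L; ring.
move/eqP; rewrite mulf_eq0 pnatr_eq0 /= subr_eq0 => /eqP ->; done.
Qed.
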